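(* Let $\varepsilon>0$, $\theta_0>0$, $\Delta t>0$, $A\ge0$, $N\in\mathbb{N}$, $h=L/N$, and assume $\mathcal{M}\equiv1$. Consider the scheme: given $\phi^n,\phi^{n-1}\in\mathcal{C}_{\rm per}$, find $\phi^{n+1},\mu^{n+1}\in\mathcal{C}_{\rm per}$ with $$\frac{\tfrac32\phi^{n+1}-2\phi^n+\tfrac12\phi^{n-1}}{\Delta t}=\Delta_h\mu^{n+1},$$ $$\mu^{n+1}=\ln(1+\phi^{n+1})-\ln(1-\phi^{n+1})-\theta_0(2\phi^n-\phi^{n-1})-A\Delta t\,\Delta_h(\phi^{n+1}-\phi^n)-\varepsilon^2\Delta_h\phi^{n+1}.$$ Given $\phi^n,\phi^{n-1}\in\mathcal{C}_{\rm per}$ with $\|\phi^k\|_\infty\le M$, $k=n,n-1$, for some $M>0$, and $|\overline{\phi^n}|=|\overline{\phi^{n-1}}|<1$ with $\overline{\phi^n}=\overline{\phi^{n-1}}$, there exists a unique solution $\phi^{n+1}\in\mathcal{C}_{\rm per}$ of this scheme with $\phi^{n+1}-\overline{\phi^n}\in\mathring{\mathcal{C}}_{\rm per}$ and $\|\phi^{n+1}\|_\infty<1$.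
   Context: $\Omega=(0,L)^3$, periodic; $p_i=(i-\tfrac12)h$. $\mathcal{C}_{\rm per}$: real $N$-periodic grid functions on cell centers; $\langle\nu,\xi\rangle=h^3\sum_{i,j,k=1}^N\nu_{i,j,k}\xi_{i,j,k}$; $\overline{\nu}=|\Omega|^{-1}\langle\nu,1\rangle$; $\mathring{\mathcal{C}}_{\rm per}=\{\overline\nu=0\}$; $\|\nu\|_\infty=\max|\nu_{i,j,k}|$. $\Delta_h$: standard 7-point discrete Laplacian. $A$ is the coefficient of a Douglas–Dupont-type regularization term. *)

(* Defs.v *)
From mathcomp Require Import all_boot all_order all_algebra.
From mathcomp Require Import all_classical all_reals all_analysis.
Set Implicit Arguments. Unset Strict Implicit. Unset Printing Implicit Defensive.
Import Order.TTheory GRing.Theory Num.Theory.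
Local Open Scope ring_scope.

(* Real N-periodic grid functions on cell centers: indices i,j,k in {0..N-1}
   (paper's 1..N), periodicity realised by cyclic successor/predecessor. *)
Definition grid (R : realType) (N : nat) := 'I_N -> 'I_N -> 'I_N -> R.

Definition lap_h (R : realType) (N : nat) (h : R) (f : grid R N) : grid R N :=
  fun i j k =>
    ((f (ordS i) j k - 2 * f i j k + f (ord_pred i) j k)
   + (f i (ordS j) k - 2 * f i j k + f i (ord_pred j) k)
   + (f i j (ordS k) - 2 * f i j k + f i j (ord_pred k))) / (h ^+ 2).

Definition ip (R : realType) (N : nat) (h : R) (nu xi : grid R N) : R :=
  h ^+ 3 * \sum_(i < N) \sum_(j < N) \sum_(k < N) nu i j k * xi i j k.

(* mean: |Omega|^{-1} <nu, 1>, |Omega| = L^3 *)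
Definition gmean (R : realType) (N : nat) (L h : R) (nu : grid R N) : R :=
  ip h nu (fun _ _ _ => 1) / (L ^+ 3).

Definition normInf (R : realType) (N : nat) (nu : grid R N) : R :=
  \big[Num.max/0]_(i < N) \big[Num.max/0]_(j < N) \big[Num.max/0]_(k < N) `|nu i j k|.

Definition scheme (R : realType) (N : nat) (h eps theta0 dt A : R)
  (phinm1 phin phi mu : grid R N) : Prop :=
  (forall i j k,
    ((3%:R / 2%:R) * phi i j k - 2 * phin i j k + (1 / 2%:R) * phinm1 i j k) / dt
    = lap_h h mu i j k) /\
  (forall i j k,
    mu i j k = ln (1 + phi i j k) - ln (1 - phi i j k)
               - theta0 * (2 * phin i j k - phinm1 i j k)
               - A * dt * lap_h h (fun a b c => phi a b c - phin a b c) i j k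
               - eps ^+ 2 * lap_h h phi i j k).

(* Main.v *)
From HB Require Import structures.
Require Import Defs.
From mathcomp Require Import all_boot all_order all_algebra.
From mathcomp Require Import all_classical all_reals all_analysis.
From mathcomp Require Import ring lra zify.
Set Implicit Arguments. Unset Strict Implicit. Unset Printing Implicit Defensive.
Import Order.TTheory GRing.Theory Num.Theory.
Local Open Scope ring_scope.

Section GridAlg.
Variables (R : realType) (N : nat).
Local Notation G := (grid R N).

Definition gsum (u : G) : R := \sum_(i < N) \sum_(j < N) \sum_(k < N) u i j k.

Lemma gsumD (u v : G) : gsum (fun i j k => u i j k + v i j k) = gsum u + gsum v.
Proof.
rewrite /gsum -big_split; apply: eq_bigr => i _.
rewrite -big_split; apply: eq_bigr => j _; by rewrite -big_split.
Qed.

Lemma gsumZ (c : R) (u : G) : gsum (fun i j k => c * u i j k) = c * gsum u.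
Proof.
rewrite /gsum mulr_sumr; apply: eq_bigr => i _.
rewrite mulr_sumr; apply: eq_bigr => j _; by rewrite mulr_sumr.
Qed.

Lemma gsumN (u : G) : gsum (fun i j k => - u i j k) = - gsum u.
Proof.
rewrite /gsum -!sumrN; apply: eq_bigr => i _; rewrite -sumrN; apply: eq_bigr => j _;
  by rewrite -sumrN.
Qed.

Lemma gsumB (u v : G) : gsum (fun i j k => u i j k - v i j k) = gsum u - gsum v.
Proof. by rewrite gsumD gsumN. Qed.

Lemma gsum_ext (u v : G) : (forall i j k, u i j k = v i j k) -> gsum u = gsum v.
Proof.
move=> H; rewrite /gsum; apply: eq_bigr => i _; apply: eq_bigr => j _;
  apply: eq_bigr => k _; exact: H.
Qed.

Lemma gsum_le (u v : G) : (forall i j k, u i j k <= v i j k) -> gsum u <= gsum v.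
Proof.
move=> H; rewrite /gsum; apply: ler_sum => i _; apply: ler_sum => j _;
  apply: ler_sum => k _; exact: H.
Qed.

Lemma gsum_const (c : R) : gsum (fun _ _ _ => c) = (N%:R ^+ 3) * c.
Proof.
rewrite /gsum !sumr_const !card_ord -!mulrnA -[LHS]mulr_natl !natrM; ring.
Qed.

Lemma gsum_delta (u : G) i0 j0 k0 :
  gsum (fun i j k => ((i == i0) && (j == j0) && (k == k0))%:R * u i j k)
  = u i0 j0 k0.
Proof.
rewrite /gsum (bigD1 i0) //= [X in _ + X]big1 ?addr0; last first.
  move=> i /negbTE Hi; apply: big1 => j _; apply: big1 => k _.
  by rewrite Hi /= mul0r.
rewrite (bigD1 j0) //= [X in _ + X]big1 ?addr0; last first.
  move=> j /negbTE Hj; apply: big1 => k _.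
  by rewrite eqxx Hj /= mul0r.
rewrite (bigD1 k0) //= [X in _ + X]big1 ?addr0; last first.
  move=> k /negbTE Hk; by rewrite !eqxx Hk /= mul0r.
by rewrite !eqxx mul1r.
Qed.

Definition gmul (u v : G) : G := fun i j k => u i j k * v i j k.

Record shiftop := ShiftOp {
  s_op : G -> G; p_op : G -> G;
  s_sum : forall u, gsum (s_op u) = gsum u;
  sp_id : forall u, s_op (p_op u) = u;
  ps_id : forall u, p_op (s_op u) = u;
  s_mul : forall u v, s_op (gmul u v) = gmul (s_op u) (s_op v) }.

Lemma p_sum (S : shiftop) u : gsum (p_op S u) = gsum u.
Proof. by rewrite -(s_sum S) sp_id. Qed.

Lemma p_mul (S : shiftop) u v : p_op S (gmul u v) = gmul (p_op S u) (p_op S v).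
Proof.
by rewrite -{1}(sp_id S u) -{1}(sp_id S v) -(s_mul S) ps_id.
Qed.

Definition D2 (S : shiftop) (u : G) : G :=
  fun i j k => s_op S u i j k - 2 * u i j k + p_op S u i j k.

Lemma sum_mul_s (S : shiftop) u v :
  gsum (gmul u (s_op S v)) = gsum (gmul (p_op S u) v).
Proof. by rewrite -(p_sum S) p_mul (ps_id S). Qed.

Lemma sum_mul_p (S : shiftop) u v :
  gsum (gmul u (p_op S v)) = gsum (gmul (s_op S u) v).
Proof. by rewrite -(s_sum S) (s_mul S) (sp_id S). Qed.

Lemma D2_sym (S : shiftop) u v :
  gsum (gmul u (D2 S v)) = gsum (gmul (D2 S u) v).
Proof.
have E1 : gsum (gmul u (D2 S v)) = gsum (gmul u (s_op S v))
   - 2 * gsum (gmul u v) + gsum (gmul u (p_op S v)).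
  rewrite -gsumZ -gsumB -gsumD; apply: gsum_ext => i j k; rewrite /gmul /D2; ring.
have E2 : gsum (gmul (D2 S u) v) = gsum (gmul (s_op S u) v)
   - 2 * gsum (gmul u v) + gsum (gmul (p_op S u) v).
  rewrite -gsumZ -gsumB -gsumD; apply: gsum_ext => i j k; rewrite /gmul /D2; ring.
by rewrite E1 E2 sum_mul_s sum_mul_p addrC [RHS]addrC addrA [RHS]addrA
  [in RHS](addrC (gsum _)).
Qed.

Lemma D2_neg (S : shiftop) u :
  gsum (gmul u (D2 S u)) =
  - gsum (fun i j k => (s_op S u i j k - u i j k) ^+ 2).
Proof.
have E1 : gsum (gmul u (D2 S u)) = gsum (gmul u (s_op S u))
   - 2 * gsum (gmul u u) + gsum (gmul u (p_op S u)).
  rewrite -gsumZ -gsumB -gsumD; apply: gsum_ext => i j k; rewrite /gmul /D2; ring.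
have E2 : gsum (fun i j k => (s_op S u i j k - u i j k) ^+ 2) =
   gsum (gmul (s_op S u) (s_op S u)) - 2 * gsum (gmul u (s_op S u))
   + gsum (gmul u u).
  rewrite -gsumZ -gsumB -gsumD; apply: gsum_ext => i j k; rewrite /gmul; ring.
rewrite E1 E2 sum_mul_p -s_mul s_sum.
have -> : gsum (gmul (s_op S u) u) = gsum (gmul u (s_op S u)).
  by apply: gsum_ext => i j k; rewrite /gmul mulrC.
ring.
Qed.

Lemma D2_sum (S : shiftop) u : gsum (fun i j k => D2 S u i j k) = 0.
Proof.
rewrite /D2 (gsum_ext (v := fun i j k => (s_op S u i j k + p_op S u i j k)
   - 2 * u i j k)); last by move=> i j k; ring.
by rewrite gsumB gsumD gsumZ s_sum p_sum; ring.
Qed.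

Definition sh1 (u : G) : G := fun i j k => u (ordS i) j k.
Definition ph1 (u : G) : G := fun i j k => u (ord_pred i) j k.
Definition sh2 (u : G) : G := fun i j k => u i (ordS j) k.
Definition ph2 (u : G) : G := fun i j k => u i (ord_pred j) k.
Definition sh3 (u : G) : G := fun i j k => u i j (ordS k).
Definition ph3 (u : G) : G := fun i j k => u i j (ord_pred k).

Lemma sumS (F : 'I_N -> R) : \sum_(i < N) F (ordS i) = \sum_(i < N) F i.
Proof. by rewrite [RHS](reindex_inj (@ordS_inj N)). Qed.

Definition S1 : shiftop.
refine (@ShiftOp sh1 ph1 _ _ _ _).
- move=> u; rewrite /gsum /sh1; exact: (sumS (fun i => \sum_j \sum_k u i j k)).
- by move=> u; do 3 (apply: funext => ?); rewrite /sh1 /ph1 ordSK.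
- by move=> u; do 3 (apply: funext => ?); rewrite /sh1 /ph1 ord_predK.
- by [].
Defined.

Definition S2 : shiftop.
refine (@ShiftOp sh2 ph2 _ _ _ _).
- move=> u; rewrite /gsum /sh2; apply: eq_bigr => i _.
  exact: (sumS (fun j => \sum_k u i j k)).
- by move=> u; do 3 (apply: funext => ?); rewrite /sh2 /ph2 ordSK.
- by move=> u; do 3 (apply: funext => ?); rewrite /sh2 /ph2 ord_predK.
- by [].
Defined.

Definition S3 : shiftop.
refine (@ShiftOp sh3 ph3 _ _ _ _).
- move=> u; rewrite /gsum /sh3; apply: eq_bigr => i _; apply: eq_bigr => j _.
  exact: (sumS (fun k => u i j k)).
- by move=> u; do 3 (apply: funext => ?); rewrite /sh3 /ph3 ordSK.
- by move=> u; do 3 (apply: funext => ?); rewrite /sh3 /ph3 ord_predK.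
- by [].
Defined.

Variable h : R.

Lemma lapE (u : G) i j k :
  lap_h h u i j k = (D2 S1 u i j k + D2 S2 u i j k + D2 S3 u i j k) / h ^+ 2.
Proof. by []. Qed.

Lemma lap_sym (u v : G) :
  gsum (gmul u (lap_h h v)) = gsum (gmul (lap_h h u) v).
Proof.
have E : forall a b : G, gsum (gmul a (lap_h h b)) =
   (gsum (gmul a (D2 S1 b)) + gsum (gmul a (D2 S2 b)) + gsum (gmul a (D2 S3 b)))
   / h ^+ 2.
  move=> a b; rewrite -!gsumD mulrC -gsumZ; apply: gsum_ext => i j k.
  rewrite /gmul lapE; ring.
have E' : forall a b : G, gsum (gmul (lap_h h a) b) =
   (gsum (gmul (D2 S1 a) b) + gsum (gmul (D2 S2 a) b) + gsum (gmul (D2 S3 a) b))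
   / h ^+ 2.
  move=> a b; rewrite -!gsumD mulrC -gsumZ; apply: gsum_ext => i j k.
  rewrite /gmul lapE; ring.
by rewrite E E' !D2_sym.
Qed.

Lemma lap_sum (u : G) : gsum (lap_h h u) = 0.
Proof.
rewrite (gsum_ext (v := fun i j k => (h ^+ 2)^-1 *
   (D2 S1 u i j k + D2 S2 u i j k + D2 S3 u i j k))); last first.
  by move=> i j k; rewrite lapE mulrC.
rewrite gsumZ !gsumD !gsumN !gsumZ !s_sum !p_sum; ring.
Qed.

Lemma lap_neg (u : G) : gsum (gmul u (lap_h h u)) =
  - (gsum (fun i j k => (sh1 u i j k - u i j k) ^+ 2) +
     gsum (fun i j k => (sh2 u i j k - u i j k) ^+ 2) +
     gsum (fun i j k => (sh3 u i j k - u i j k) ^+ 2)) / h ^+ 2.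
Proof.
have E : gsum (gmul u (lap_h h u)) =
   (gsum (gmul u (D2 S1 u)) + gsum (gmul u (D2 S2 u)) + gsum (gmul u (D2 S3 u)))
   / h ^+ 2.
  rewrite -!gsumD mulrC -gsumZ; apply: gsum_ext => i j k.
  rewrite /gmul lapE; ring.
rewrite E !D2_neg /=; ring.
Qed.

Lemma gsum_sq_ge0 (u : G) : 0 <= gsum (fun i j k => u i j k ^+ 2).
Proof.
rewrite /gsum; apply: sumr_ge0 => i _; apply: sumr_ge0 => j _;
  apply: sumr_ge0 => k _; exact: sqr_ge0.
Qed.

Lemma lap_nonpos (u : G) : gsum (gmul u (lap_h h u)) <= 0.
Proof.
rewrite lap_neg mulNr oppr_le0; apply: divr_ge0; last exact: sqr_ge0.
apply: addr_ge0; first apply: addr_ge0.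
- exact: (gsum_sq_ge0 (fun i j k => sh1 u i j k - u i j k)).
- exact: (gsum_sq_ge0 (fun i j k => sh2 u i j k - u i j k)).
- exact: (gsum_sq_ge0 (fun i j k => sh3 u i j k - u i j k)).
Qed.

End GridAlg.

Section Kernel.
Variables (R : realType) (N : nat).
Local Notation G := (grid R N).

Lemma psum_eq0 (I : finType) (F : I -> R) :
  (forall i, 0 <= F i) -> \sum_i F i = 0 -> forall i, F i = 0.
Proof.
move=> H0 H i; apply: (psumr_eq0P (P := predT)) => // j _; exact: H0.
Qed.

Lemma gsum_sq_eq0 (u : G) : gsum (fun i j k => u i j k ^+ 2) = 0 ->
  forall i j k, u i j k = 0.
Proof.
move=> H i j k.
have P1 : forall i, 0 <= \sum_j \sum_k u i j k ^+ 2.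
  by move=> ?; apply: sumr_ge0 => ? _; apply: sumr_ge0 => ? _; exact: sqr_ge0.
have P2 : forall j, 0 <= \sum_k u i j k ^+ 2.
  by move=> ?; apply: sumr_ge0 => ? _; exact: sqr_ge0.
have P3 : forall k, 0 <= u i j k ^+ 2 by move=> ?; exact: sqr_ge0.
have Hi := psum_eq0 P1 H i.
have Hj := psum_eq0 P2 Hi j.
have Hk := psum_eq0 P3 Hj k.
by apply/eqP; rewrite -sqrf_eq0 Hk.
Qed.

Lemma cyc_const (F : 'I_N -> R) : (forall i, F (ordS i) = F i) ->
  forall i i', F i = F i'.
Proof.
move=> HS.
suff H : forall m (Hm : (m < N)%N) (H0 : (0 < N)%N), F (Ordinal Hm) = F (Ordinal H0).
  move=> [i Hi] [i' Hi']; have H0 : (0 < N)%N by apply: leq_ltn_trans Hi.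
  by rewrite (H i Hi H0) (H i' Hi' H0).
elim=> [|m IH] Hm H0; first by congr F; apply: val_inj.
have Hm' : (m < N)%N by apply: ltnW.
rewrite -(IH Hm' H0) -(HS (Ordinal Hm')); congr F; apply: val_inj => /=.
by rewrite modn_small.
Qed.

Variable h : R.
Hypothesis Hh : h != 0.

Lemma lap_kernel (u : G) : (forall i j k, lap_h h u i j k = 0) ->
  forall i j k i' j' k', u i j k = u i' j' k'.
Proof.
move=> H.
have E : gsum (gmul u (lap_h h u)) = 0.
  rewrite (gsum_ext (v := fun _ _ _ => 0)); last by move=> i j k; rewrite /gmul H mulr0.
  by rewrite gsum_const mulr0.
move: E; rewrite lap_neg => /eqP; rewrite mulf_eq0 invr_eq0 expf_eq0 /= (negbTE Hh).
rewrite orbF oppr_eq0 => /eqP E.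
have G1 := gsum_sq_ge0 (fun i j k => sh1 u i j k - u i j k).
have G2 := gsum_sq_ge0 (fun i j k => sh2 u i j k - u i j k).
have G3 := gsum_sq_ge0 (fun i j k => sh3 u i j k - u i j k).
have Z1 : gsum (fun i j k => (sh1 u i j k - u i j k) ^+ 2) = 0 by lra.
have Z2 : gsum (fun i j k => (sh2 u i j k - u i j k) ^+ 2) = 0 by lra.
have Z3 : gsum (fun i j k => (sh3 u i j k - u i j k) ^+ 2) = 0 by lra.
have E1 := gsum_sq_eq0 (u := fun i j k => sh1 u i j k - u i j k) Z1.
have E2 := gsum_sq_eq0 (u := fun i j k => sh2 u i j k - u i j k) Z2.
have E3 := gsum_sq_eq0 (u := fun i j k => sh3 u i j k - u i j k) Z3.
move=> i j k i' j' k'.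
have -> : u i j k = u i' j k.
  apply: (cyc_const (F := fun x => u x j k)) => x.
  by apply/eqP; rewrite -subr_eq0; apply/eqP; exact: (E1 x j k).
have -> : u i' j k = u i' j' k.
  apply: (cyc_const (F := fun x => u i' x k)) => x.
  by apply/eqP; rewrite -subr_eq0; apply/eqP; exact: (E2 i' x k).
apply: (cyc_const (F := fun x => u i' j' x)) => x.
by apply/eqP; rewrite -subr_eq0; apply/eqP; exact: (E3 i' j' x).
Qed.

End Kernel.

Lemma img_of_mean (K : fieldType) (vT : vectType K) (f : {linear vT -> vT})
  (e : vT) (m : vT -> K) :
  (forall u, f u = 0 -> exists c, u = c *: e) ->
  (forall u v c, m (c *: u + v) = c * m u + m v) ->
  (forall u, m (f u) = 0) -> m e != 0 ->
  forall v, m v = 0 -> v \in limg (linfun f).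
Proof.
move=> Hker Hm Hmf He v Hv.
set F := linfun f.
have Hdker : (\dim (lker F) <= 1)%N.
  have S : (lker F <= <[e]>)%VS.
    apply/subvP => u; rewrite memv_ker lfunE => /eqP /Hker [c ->].
    by apply: memvZ; exact: memv_line.
  by apply: (leq_trans (dimvS S)); rewrite dim_vline; case: (e != 0).
have Hrk := limg_ker_dim F fullv.
rewrite capfv in Hrk.
case: (boolP (v \in limg F)) => // Hvn; exfalso.
set U := (limg F + <[v]>)%VS.
have HUs : (limg F <= U)%VS by apply: addvSl.
have HUne : (limg F != U).
  apply/negP => /eqP HU; move: Hvn; rewrite HU /U; apply/negP/negPn.
  have : 0 + v \in (limg F + <[v]>)%VS.
    by apply: memv_add; [exact: mem0v | exact: memv_line].
  by rewrite add0r.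
have Hlt : (\dim (limg F) < \dim U)%N.
  by rewrite (ltn_leqif (dimv_leqif_eq HUs)).
have HUf : U = fullv.
  apply/eqP; rewrite eqEdim subvf /=.
  lia.
have : e \in U by rewrite HUf memvf.
case/memv_addP => u Hu [w Hw Hew].
case/memv_imgP: Hu => x _ Hx.
case/vlineP: Hw => c Hc.
move: He; rewrite Hew Hx Hc lfunE addrC Hm Hmf Hv mulr0 addr0.
by rewrite eqxx.
Qed.

Section LinAlg.
Variables (R : realType) (N : nat) (h : R).
Hypothesis Hh : h != 0.
Hypothesis HN : (0 < N)%N.
Local Notation G := (grid R N).
Local Notation T := ('I_N * 'I_N * 'I_N)%type.
Definition nn := #|{: T}|.
Local Notation V := 'rV[R]_nn.

Definition gr (v : V) : G := fun i j k => v ord0 (enum_rank (i, j, k)).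
Definition ungr (g : G) : V :=
  \row_p g (enum_val p).1.1 (enum_val p).1.2 (enum_val p).2.

Lemma grK g : gr (ungr g) = g.
Proof. by do 3 (apply: funext => ?); rewrite /gr /ungr mxE enum_rankK. Qed.

Lemma ungr_val (g : G) p : ungr g ord0 p = g (enum_val p).1.1 (enum_val p).1.2 (enum_val p).2.
Proof. by rewrite mxE. Qed.

Lemma ungrK v : ungr (gr v) = v.
Proof.
apply/rowP => p; rewrite mxE /gr.
have -> : ((enum_val p).1.1, (enum_val p).1.2, (enum_val p).2) = enum_val p.
  by case: (enum_val p) => [[]].
by rewrite enum_valK.
Qed.

Lemma gr_lin (c : R) u v : gr (c *: u + v) = fun i j k => c * gr u i j k + gr v i j k.
Proof. by do 3 (apply: funext => ?); rewrite /gr !mxE. Qed.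

Lemma ungr_lin (c : R) (u v : G) :
  ungr (fun i j k => c * u i j k + v i j k) = c *: ungr u + ungr v.
Proof. by apply/rowP => p; rewrite !mxE. Qed.

Lemma lap_lin (c : R) (u v : G) i j k :
  lap_h h (fun i j k => c * u i j k + v i j k) i j k =
  c * lap_h h u i j k + lap_h h v i j k.
Proof. rewrite /lap_h /=; ring. Qed.

Lemma lap_const (c : R) (i j k : 'I_N) : lap_h h (fun _ _ _ => c) i j k = 0.
Proof. rewrite /lap_h /=; ring. Qed.

Definition Dr (v : V) : V := ungr (lap_h h (gr v)).

Lemma Dr_lin : linear Dr.
Proof.
move=> c u v; rewrite /Dr gr_lin -ungr_lin; congr ungr.
by do 3 (apply: funext => ?); rewrite lap_lin.
Qed.

Definition DrL : {linear V -> V} := HB.pack Dr (GRing.isLinear.Build _ _ _ _ Dr Dr_lin).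

Definition Linv : 'End(V) := ((linfun DrL)^-1)%VF.

Definition Lg (g : G) : G := gr (Linv (ungr g)).

Lemma gsum_gr_lin (c : R) u v : gsum (gr (c *: u + v)) = c * gsum (gr u) + gsum (gr v).
Proof. by rewrite gr_lin gsumD gsumZ. Qed.

Lemma Lg_spec (g : G) : gsum g = 0 -> forall i j k, lap_h h (Lg g) i j k = g i j k.
Proof.
move=> Hg.
have Him : ungr g \in limg (linfun DrL).
  apply: (@img_of_mean _ _ DrL (ungr (fun _ _ _ => 1)) (fun v => gsum (gr v))).
  - move=> u Hu.
    have Hl : forall i j k, lap_h h (gr u) i j k = 0.
      move=> i j k; have := congr1 gr Hu; rewrite /= /Dr grK => ->.
      by rewrite /gr mxE.
    have Hc := lap_kernel Hh Hl.
    set i0 := Ordinal HN.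
    exists (gr u i0 i0 i0).
    rewrite -{1}(ungrK u); apply/rowP => p; rewrite !mxE mulr1; exact: Hc.
  - by move=> u v c; exact: gsum_gr_lin.
  - by move=> u; rewrite /= /Dr grK lap_sum.
  - by rewrite grK gsum_const mulr1 expf_eq0 /= pnatr_eq0 -lt0n HN.
  - by rewrite grK.
have := limg_lfunVK Him; rewrite lfunE /= /Dr => E.
move=> i j k; have := congr1 gr E; rewrite !grK => ->; by [].
Qed.

Lemma Lg_lin (c : R) (u v : G) i j k :
  Lg (fun i j k => c * u i j k + v i j k) i j k = c * Lg u i j k + Lg v i j k.
Proof. by rewrite /Lg ungr_lin linearP gr_lin. Qed.

Lemma Lg_decomp (g : G) i j k :
  Lg g i j k = \sum_(p < nn) ungr g ord0 p *
     (Linv (delta_mx 0 p)) ord0 (enum_rank (i, j, k)).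
Proof.
rewrite /Lg /gr {1}(row_sum_delta (ungr g)) linear_sum summxE.
by apply: eq_bigr => p _; rewrite linearZ mxE.
Qed.

End LinAlg.

Section Functional.
Variables (R : realType) (N : nat) (h : R).
Hypothesis Hh : h != 0.
Hypothesis HN : (0 < N)%N.
Local Notation G := (grid R N).

Lemma xlnx_bound (A s : R) : 0 < A -> 0 < A + s ->
  (A + s) * ln (A + s) - A * ln A <= s * (ln A + 1) + s ^+ 2 / A.
Proof.
move=> HA HAs.
have HA0 : A != 0 by rewrite gt_eqF.
have E1 : (A + s) / A = 1 + s / A by field.
have H1 : ln (A + s) - ln A <= s / A.
  have -> : ln (A + s) - ln A = ln (1 + s / A).
    by rewrite -ln_div ?posrE // E1.
  apply: le_ln1Dx.
  have : 0 < (A + s) / A by apply: divr_gt0.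
  rewrite E1; lra.
have H2 : (A + s) * (ln (A + s) - ln A) <= (A + s) * (s / A).
  by rewrite ler_wpM2l // ltW.
have E2 : (A + s) * (s / A) = s + s ^+ 2 / A by field.
have E3 : (A + s) * ln (A + s) - A * ln A = (A + s) * (ln (A + s) - ln A) + s * ln A by ring.
rewrite E3; lra.
Qed.

Variables (a kk dl : R) (g b : G).
Hypothesis Hdl : 0 < dl.
Hypothesis Hkk : kk != 0.

Definition lnd (x : R) := ln (Num.max x dl).
Definition Ent (x : R) := (1 + x) * lnd (1 + x) + (1 - x) * lnd (1 - x).
Definition fp (x : R) := ln (1 + x) - ln (1 - x).

Definition inbox (x : R) := dl <= 1 + x /\ dl <= 1 - x.

Lemma Ent_bound (x s : R) : inbox x -> inbox (x + s) ->
  Ent (x + s) - Ent x <= s * fp x + s ^+ 2 * (1 / (1 + x) + 1 / (1 - x)).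
Proof.
move=> [H1 H2] [H3 H4].
rewrite /Ent /lnd !max_l //.
have P1 : 0 < 1 + x by apply: lt_le_trans Hdl H1.
have P2 : 0 < 1 - x by apply: lt_le_trans Hdl H2.
have P3 : 0 < (1 + x) + s by rewrite -addrA; apply: lt_le_trans Hdl H3.
have P4 : 0 < (1 - x) + - s.
  by rewrite (_ : (1 - x) + - s = 1 - (x + s)); [apply: lt_le_trans Hdl H4 | ring].
have B1 := xlnx_bound P1 P3.
have B2 := xlnx_bound P2 P4.
have -> : 1 + (x + s) = 1 + x + s by ring.
have -> : 1 - (x + s) = 1 - x + - s by ring.
have E : s ^+ 2 * (1 / (1 + x) + 1 / (1 - x)) = s ^+ 2 / (1 + x) + (- s) ^+ 2 / (1 - x).
  by rewrite sqrrN; field; rewrite !gt_eqF.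
rewrite E /fp; lra.
Qed.

Definition pert (phi w : G) (t : R) : G := fun i j k => phi i j k + t * w i j k.
Definition gdiff (u v : G) : G := fun i j k => u i j k - v i j k.

Definition J (phi : G) : R :=
  gsum (fun i j k => Ent (phi i j k) + g i j k * phi i j k)
  - a / 2 * gsum (gmul phi (lap_h h phi))
  - 1 / (2 * kk) * gsum (gmul (gdiff phi b) (Lg h (gdiff phi b))).

Definition Gt (phi : G) : G := fun i j k =>
  fp (phi i j k) + g i j k - a * lap_h h phi i j k
  - 1 / kk * Lg h (gdiff phi b) i j k.

Definition Cw (phi w : G) : R :=
  gsum (fun i j k => w i j k ^+ 2 * (1 / (1 + phi i j k) + 1 / (1 - phi i j k)))
  - a / 2 * gsum (gmul w (lap_h h w))
  - 1 / (2 * kk) * gsum (gmul w (Lg h w)).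

Lemma Lg_sym (u v : G) : gsum u = 0 -> gsum v = 0 ->
  gsum (gmul u (Lg h v)) = gsum (gmul v (Lg h u)).
Proof.
move=> Hu Hv.
rewrite (gsum_ext (v := gmul (lap_h h (Lg h u)) (Lg h v))); last first.
  by move=> i j k; rewrite /gmul (Lg_spec Hh HN Hu).
rewrite -lap_sym; apply: gsum_ext => i j k; rewrite /gmul (Lg_spec Hh HN Hv); ring.
Qed.

Lemma lap_pert (phi w : G) t i j k :
  lap_h h (pert phi w t) i j k = lap_h h phi i j k + t * lap_h h w i j k.
Proof. rewrite /pert /lap_h /=; ring. Qed.

Lemma Lg_pert (v w : G) t i j k :
  Lg h (pert v w t) i j k = Lg h v i j k + t * Lg h w i j k.
Proof.
rewrite /pert (_ : (fun i j k => v i j k + t * w i j k) =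
   (fun i j k => t * w i j k + v i j k)); last first.
  by do 3 (apply: funext => ?); rewrite addrC.
by rewrite Lg_lin addrC.
Qed.

Lemma J_diff (phi w : G) t :
  gsum w = 0 -> gsum (gdiff phi b) = 0 ->
  J (pert phi w t) - J phi =
  gsum (fun i j k => Ent (phi i j k + t * w i j k) - Ent (phi i j k))
  + t * gsum (gmul w g)
  - a * t * gsum (gmul w (lap_h h phi)) - a / 2 * t ^+ 2 * gsum (gmul w (lap_h h w))
  - 1 / kk * t * gsum (gmul w (Lg h (gdiff phi b)))
  - 1 / (2 * kk) * t ^+ 2 * gsum (gmul w (Lg h w)).
Proof.
move=> Hw Hv.
have Ed : gdiff (pert phi w t) b = pert (gdiff phi b) w t.
  by do 3 (apply: funext => ?); rewrite /gdiff /pert; ring.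
have Q1 : gsum (gmul (pert phi w t) (lap_h h (pert phi w t))) =
   gsum (gmul phi (lap_h h phi)) + 2 * t * gsum (gmul w (lap_h h phi))
   + t ^+ 2 * gsum (gmul w (lap_h h w)).
  have S : gsum (gmul phi (lap_h h w)) = gsum (gmul w (lap_h h phi)).
    rewrite lap_sym; apply: gsum_ext => i j k; rewrite /gmul; ring.
  rewrite (gsum_ext (v := fun i j k => gmul phi (lap_h h phi) i j k +
     (t * gmul phi (lap_h h w) i j k + (t * gmul w (lap_h h phi) i j k +
     t ^+ 2 * gmul w (lap_h h w) i j k)))); last first.
    by move=> i j k; rewrite /gmul lap_pert /pert; ring.
  rewrite !gsumD !gsumZ S; ring.
have Q2 : gsum (gmul (pert (gdiff phi b) w t) (Lg h (pert (gdiff phi b) w t))) =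
   gsum (gmul (gdiff phi b) (Lg h (gdiff phi b)))
   + 2 * t * gsum (gmul w (Lg h (gdiff phi b)))
   + t ^+ 2 * gsum (gmul w (Lg h w)).
  have S : gsum (gmul (gdiff phi b) (Lg h w)) = gsum (gmul w (Lg h (gdiff phi b))).
    exact: Lg_sym.
  rewrite (gsum_ext (v := fun i j k => gmul (gdiff phi b) (Lg h (gdiff phi b)) i j k +
     (t * gmul (gdiff phi b) (Lg h w) i j k + (t * gmul w (Lg h (gdiff phi b)) i j k +
     t ^+ 2 * gmul w (Lg h w) i j k)))); last first.
    by move=> i j k; rewrite /gmul Lg_pert /pert; ring.
  rewrite !gsumD !gsumZ S; ring.
have Q0 : gsum (fun i j k => Ent (pert phi w t i j k) + g i j k * pert phi w t i j k)
  = gsum (fun i j k => Ent (phi i j k) + g i j k * phi i j k) +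
    gsum (fun i j k => Ent (phi i j k + t * w i j k) - Ent (phi i j k))
    + t * gsum (gmul w g).
  rewrite -gsumZ -!gsumD; apply: gsum_ext => i j k; rewrite /pert /gmul; ring.
by rewrite /J Ed Q1 Q2 Q0; field.
Qed.

Lemma J_pert_le (phi w : G) t :
  gsum w = 0 -> gsum (gdiff phi b) = 0 ->
  (forall i j k, inbox (phi i j k)) ->
  (forall i j k, inbox (phi i j k + t * w i j k)) ->
  J (pert phi w t) - J phi <= t * gsum (gmul w (Gt phi)) + t ^+ 2 * Cw phi w.
Proof.
move=> Hw Hv B1 B2.
rewrite J_diff //.
have HE : gsum (fun i j k => Ent (phi i j k + t * w i j k) - Ent (phi i j k)) <=
   gsum (fun i j k => t * w i j k * fp (phi i j k) +
     t ^+ 2 * (w i j k ^+ 2 * (1 / (1 + phi i j k) + 1 / (1 - phi i j k)))).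
  apply: gsum_le => i j k.
  have := Ent_bound (B1 i j k) (B2 i j k).
  by rewrite exprMn mulrA.
have E1 : gsum (fun i j k => t * w i j k * fp (phi i j k) +
     t ^+ 2 * (w i j k ^+ 2 * (1 / (1 + phi i j k) + 1 / (1 - phi i j k)))) =
   t * gsum (fun i j k => w i j k * fp (phi i j k)) +
   t ^+ 2 * gsum (fun i j k => w i j k ^+ 2 * (1 / (1 + phi i j k) + 1 / (1 - phi i j k))).
  rewrite -!gsumZ -gsumD; apply: gsum_ext => i j k; ring.
have E2 : gsum (gmul w (Gt phi)) = gsum (fun i j k => w i j k * fp (phi i j k))
   + gsum (gmul w g) - a * gsum (gmul w (lap_h h phi))
   - 1 / kk * gsum (gmul w (Lg h (gdiff phi b))).
  rewrite (gsum_ext (v := fun i j k => w i j k * fp (phi i j k) + gmul w g i j k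
     - a * gmul w (lap_h h phi) i j k - 1 / kk * gmul w (Lg h (gdiff phi b)) i j k)).
    by rewrite !gsumB gsumD !gsumZ.
  by move=> i j k; rewrite /gmul /Gt; ring.
rewrite E2 /Cw; rewrite E1 in HE.
set X1 := gsum (fun i j k => w i j k * fp (phi i j k)) in HE *.
set X2 := gsum (fun i j k => w i j k ^+ 2 * _) in HE *.
set E := gsum (fun i j k => Ent _ - Ent _) in HE *.
have HE' : E <= t * X1 + t ^+ 2 * X2 by [].
set Y1 := gsum (gmul w g).
set Y2 := gsum (gmul w (lap_h h phi)).
set Y3 := gsum (gmul w (lap_h h w)).
set Y4 := gsum (gmul w (Lg h (gdiff phi b))).
set Y5 := gsum (gmul w (Lg h w)).
have -> : t * (X1 + Y1 - a * Y2 - 1 / kk * Y4) + t ^+ 2 * (X2 - a / 2 * Y3 - 1 / (2 * kk) * Y5)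
  = (t * X1 + t ^+ 2 * X2) + (t * Y1 - a * t * Y2 - a / 2 * t ^+ 2 * Y3
     - 1 / kk * t * Y4 - 1 / (2 * kk) * t ^+ 2 * Y5) by ring.
set Z := (t * Y1 - _ - _ - _ - _).
have -> : E + t * Y1 - a * t * Y2 - a / 2 * t ^+ 2 * Y3 - 1 / kk * t * Y4
   - 1 / (2 * kk) * t ^+ 2 * Y5 = E + Z by rewrite /Z; ring.
by rewrite lerD2r.
Qed.

End Functional.

Import numFieldNormedType.Exports.

Section Cont.
Variables (R : realType) (n : nat).
Local Notation V := 'rV[R]_n.

Lemma cont_cst (c : R) : continuous (fun _ : V => c).
Proof. exact: cst_continuous. Qed.

Lemma cont_coord p : continuous (fun v : V => v ord0 p).
Proof. exact: coord_continuous. Qed.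

Lemma cont_add (F1 F2 : V -> R) : continuous F1 -> continuous F2 ->
  continuous (fun v => F1 v + F2 v).
Proof. move=> H1 H2 x; exact: (cvgD (H1 x) (H2 x)). Qed.

Lemma cont_opp (F1 : V -> R) : continuous F1 -> continuous (fun v => - F1 v).
Proof. move=> H1 x; exact: (cvgN (H1 x)). Qed.

Lemma cont_sub (F1 F2 : V -> R) : continuous F1 -> continuous F2 ->
  continuous (fun v => F1 v - F2 v).
Proof. by move=> H1 H2; apply: cont_add => //; apply: cont_opp. Qed.

Lemma cont_mul (F1 F2 : V -> R) : continuous F1 -> continuous F2 ->
  continuous (fun v => F1 v * F2 v).
Proof. move=> H1 H2 x; exact: (cvgM (H1 x) (H2 x)). Qed.

Lemma cont_sum (I : Type) (r : seq I) (F : I -> V -> R) :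
  (forall i, continuous (F i)) -> continuous (fun v => \sum_(i <- r) F i v).
Proof.
move=> H; elim: r => [|i r IH].
  under eq_fun do rewrite big_nil; exact: cont_cst.
under eq_fun do rewrite big_cons; exact: cont_add.
Qed.

Lemma cont_lnmax (dl : R) (F : V -> R) : 0 < dl -> continuous F ->
  continuous (fun v => ln (Num.max (F v) dl)).
Proof.
move=> Hdl HF x.
have H1 := continuous_max (HF x) (@cst_continuous _ R dl x).
have Hp : 0 < Num.max (F x) dl by rewrite (lt_le_trans Hdl) // le_max lexx orbT.
have H2 := continuous_ln Hp.
exact: (continuous_comp H1 H2).
Qed.

End Cont.

Section Min.
Variables (R : realType) (N : nat) (h : R).
Variables (a kk dl : R) (g b : grid R N).
Hypothesis Hdl : 0 < dl.
Local Notation G := (grid R N).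
Local Notation V := 'rV[R]_(nn N).

Lemma cont_gr i j k : continuous (fun v : V => gr v i j k).
Proof. exact: cont_coord. Qed.

Lemma cont_Lg i j k : continuous (fun v : V => Lg h (gdiff (gr v) b) i j k).
Proof.
have -> : (fun v : V => Lg h (gdiff (gr v) b) i j k) =
  (fun v => \sum_(p < nn N) (gr v (enum_val p).1.1 (enum_val p).1.2 (enum_val p).2
      - b (enum_val p).1.1 (enum_val p).1.2 (enum_val p).2) *
     (Linv N h (delta_mx 0 p)) ord0 (enum_rank (i, j, k))).
  by apply: funext => v; rewrite Lg_decomp; apply: eq_bigr => p _; rewrite mxE.
apply: cont_sum => p; apply: cont_mul; last exact: cont_cst.
apply: cont_sub; [exact: cont_gr | exact: cont_cst].
Qed.

Ltac cont_auto :=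
  repeat first [ exact: cont_Lg | exact: cont_gr | exact: cont_cst
    | apply: cont_sum => ?
    | apply: cont_lnmax => //
    | apply: cont_add | apply: cont_sub | apply: cont_mul | apply: cont_opp ].

Lemma cont_J : continuous (fun v : V => J h a kk dl g b (gr v)).
Proof.
rewrite /J.
apply: cont_sub; first apply: cont_sub.
- rewrite /gsum; apply: cont_sum => i; apply: cont_sum => j; apply: cont_sum => k.
  apply: cont_add; last by apply: cont_mul; [exact: cont_cst | exact: cont_gr].
  rewrite /Ent /lnd; apply: cont_add; apply: cont_mul.
  + apply: cont_add; [exact: cont_cst | exact: cont_gr].
  + apply: cont_lnmax => //; apply: cont_add; [exact: cont_cst | exact: cont_gr].
  + apply: cont_sub; [exact: cont_cst | exact: cont_gr].
  + apply: cont_lnmax => //; apply: cont_sub; [exact: cont_cst | exact: cont_gr].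
- apply: cont_mul; first exact: cont_cst.
  rewrite /gsum; apply: cont_sum => i; apply: cont_sum => j; apply: cont_sum => k.
  rewrite /gmul; apply: cont_mul; first exact: cont_gr.
  rewrite /lap_h; apply: cont_mul; last exact: cont_cst.
  have H3 : forall x1 y1 z1 x2 y2 z2 x3 y3 z3, continuous (fun v : V =>
     gr v x1 y1 z1 - 2 * gr v x2 y2 z2 + gr v x3 y3 z3).
    move=> *; apply: cont_add; last exact: cont_gr.
    apply: cont_sub; first exact: cont_gr.
    by apply: cont_mul; [exact: cont_cst | exact: cont_gr].
  by apply: cont_add; [apply: cont_add|]; exact: H3.
- apply: cont_mul; first exact: cont_cst.
  rewrite /gsum; apply: cont_sum => i; apply: cont_sum => j; apply: cont_sum => k.
  rewrite /gmul; apply: cont_mul; last exact: cont_Lg.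
  apply: cont_sub; [exact: cont_gr | exact: cont_cst].
Qed.

End Min.

Section Min2.
Local Open Scope classical_set_scope.
Local Open Scope ring_scope.
Variables (R : realType) (N : nat) (h : R).
Variables (a kk dl : R) (g b : grid R N).
Hypothesis Hdl : 0 < dl.
Local Notation G := (grid R N).
Local Notation V := 'rV[R]_(nn N).

Lemma inbox_itv x : inbox dl x <-> x \in `[-(1 - dl), 1 - dl].
Proof.
rewrite in_itv /=; split.
- by move=> [H1 H2]; apply/andP; split; lra.
- by move=> /andP [H1 H2]; split; lra.
Qed.

Lemma exists_min (c0 : R) : inbox dl c0 -> gsum (fun (_ _ _ : 'I_N) => c0) = gsum b ->
  exists phi : G, (forall i j k, inbox dl (phi i j k)) /\ gsum phi = gsum b /\
    forall psi : G, (forall i j k, inbox dl (psi i j k)) -> gsum psi = gsum b ->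
      J h a kk dl g b phi <= J h a kk dl g b psi.
Proof.
move=> Hc0 Hs0.
set B := [set v : V | forall p, v ord0 p \in `[-(1 - dl), 1 - dl]].
set C := [set v : V | gsum (gr v) = gsum b].
have CB : compact B.
  have H := (@rV_compact _ (nn N) (fun _ => `[-(1 - dl), 1 - dl]%classic)
     (fun _ => @segment_compact R (- (1 - dl)) (1 - dl))).
  exact H.
have Fc : continuous (fun v : V => gsum (gr v)).
  rewrite /gsum => v; apply: cont_sum => i; apply: cont_sum => j; apply: cont_sum => k.
  exact: cont_gr.
have CC : closed C.
  have -> : C = (fun v : V => gsum (gr v)) @^-1` [set x | x = gsum b] by [].
  apply: preimage_closed; last exact: closed_eq.
  by move=> x _; apply: Fc.
have CK := compact_closedI CB CC.
have NE : (B `&` C) !=set0.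
  exists (ungr (fun _ _ _ => c0)); split.
  - by move=> p; rewrite mxE; apply/inbox_itv.
  - by rewrite /C /= grK.
have [v Hv Hmin] := compact_EVT_min NE CK (continuous_subspaceT (@cont_J R N h a kk dl g b Hdl)).
move/set_mem: Hv => [HvB HvC].
exists (gr v); split; [|split].
- by move=> i j k; apply/inbox_itv; exact: HvB.
- exact: HvC.
- move=> psi Hpsi Hspsi.
  have := Hmin (ungr psi); rewrite grK; apply; apply: mem_set; split.
  + by move=> p; rewrite mxE; apply/inbox_itv.
  + by rewrite /C /= grK.
Qed.

End Min2.

Section Core.
Variables (R : realType) (N : nat) (h a kk : R) (g b : grid R N) (c : R).
Hypothesis Hh : h != 0.
Hypothesis HN : (0 < N)%N.
Hypothesis Hkk : kk != 0.
Hypothesis Hc1 : -1 < c.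
Hypothesis Hc2 : c < 1.
Hypothesis Hcs : gsum (fun (_ _ _ : 'I_N) => c) = gsum b.
Local Notation G := (grid R N).

Definition rest (phi : G) : G := fun i j k =>
  g i j k - a * lap_h h phi i j k - 1 / kk * Lg h (gdiff phi b) i j k.

Lemma Gt_rest phi i j k : Gt h a kk g b phi i j k = fp (phi i j k) + rest phi i j k.
Proof. rewrite /Gt /rest; ring. Qed.

Definition Cp (i j k : 'I_N) (p : 'I_(nn N)) : R :=
  (Linv N h (delta_mx 0 p)) ord0 (enum_rank (i, j, k)).

Definition bp (p : 'I_(nn N)) : R :=
  b (enum_val p).1.1 (enum_val p).1.2 (enum_val p).2.

Definition K0 : R := gsum (fun i j k => `|g i j k| + `|a| * (12 / h ^+ 2)
  + `|1 / kk| * \sum_(p < nn N) (1 + `|bp p|) * `|Cp i j k p|).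

Lemma term_le_gsum (u : G) : (forall i j k, 0 <= u i j k) ->
  forall i j k, u i j k <= gsum u.
Proof.
move=> H i j k; rewrite /gsum.
have L1 : forall (F : 'I_N -> R) x, (forall y, 0 <= F y) -> F x <= \sum_y F y.
  move=> F x HF; rewrite (bigD1 x) //= lerDl; apply: sumr_ge0 => y _; exact: HF.
apply: le_trans (L1 _ i _); last first.
  by move=> y; apply: sumr_ge0 => ? _; apply: sumr_ge0 => ? _; exact: H.
apply: le_trans (L1 _ j _); last by move=> y; apply: sumr_ge0 => ? _; exact: H.
exact: L1.
Qed.

Definition bnd1 (phi : G) := forall i j k, -1 <= phi i j k <= 1.

Lemma lap_bound phi : bnd1 phi -> forall i j k, `|lap_h h phi i j k| <= 12 / h ^+ 2.
Proof.
move=> B i j k; rewrite /lap_h normrM normfV (ger0_norm (sqr_ge0 h)).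
apply: ler_wpM2r; first by rewrite invr_ge0 sqr_ge0.
have := B i j k; have := B (ordS i) j k; have := B (ord_pred i) j k.
have := B i (ordS j) k; have := B i (ord_pred j) k.
have := B i j (ordS k); have := B i j (ord_pred k).
move=> /andP[? ?] /andP[? ?] /andP[? ?] /andP[? ?] /andP[? ?] /andP[? ?] /andP[? ?].
rewrite ler_norml; apply/andP; split; lra.
Qed.

Lemma Lg_bound phi : bnd1 phi -> forall i j k,
  `|Lg h (gdiff phi b) i j k| <= \sum_(p < nn N) (1 + `|bp p|) * `|Cp i j k p|.
Proof.
move=> B i j k; rewrite Lg_decomp.
apply: le_trans (ler_norm_sum _ _ _) _; apply: ler_sum => p _.
rewrite normrM mxE; apply: ler_wpM2r; first exact: normr_ge0.
rewrite /gdiff; apply: le_trans (ler_normB _ _) _; rewrite lerD2r /bp.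
have := B (enum_val p).1.1 (enum_val p).1.2 (enum_val p).2 => /andP[? ?].
by rewrite ler_norml; apply/andP; split.
Qed.

Lemma rest_bound phi : bnd1 phi -> forall i j k, `|rest phi i j k| <= K0.
Proof.
move=> B i j k.
apply: le_trans (term_le_gsum _ i j k); last first.
  move=> x y z; apply: addr_ge0; first apply: addr_ge0.
  - exact: normr_ge0.
  - by apply: mulr_ge0; [exact: normr_ge0 | apply: divr_ge0; [lra | exact: sqr_ge0]].
  - apply: mulr_ge0; first exact: normr_ge0.
    apply: sumr_ge0 => p _; apply: mulr_ge0; last exact: normr_ge0.
    have := normr_ge0 (bp p); lra.
rewrite /rest /=.
apply: le_trans (ler_normB _ _) _; apply: lerD; last first.
  by rewrite normrM; apply: ler_wpM2l; [exact: normr_ge0 | exact: Lg_bound].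
apply: le_trans (ler_normB _ _) _; apply: lerD => //.
by rewrite normrM; apply: ler_wpM2l; [exact: normr_ge0 | exact: lap_bound].
Qed.

End Core.

Section Core2.
Variables (R : realType) (N : nat) (h a kk : R) (g b : grid R N).
Hypothesis Hh : h != 0.
Hypothesis HN : (0 < N)%N.
Hypothesis Hkk : kk != 0.
Local Notation G := (grid R N).

Variable dl : R.
Hypothesis Hdl : 0 < dl.
Variable phi : G.
Hypothesis Hbox : forall i j k, inbox dl (phi i j k).
Hypothesis Hsum : gsum phi = gsum b.
Hypothesis Hmin : forall psi : G, (forall i j k, inbox dl (psi i j k)) ->
  gsum psi = gsum b -> J h a kk dl g b phi <= J h a kk dl g b psi.

Lemma fo (w : G) t0 : gsum w = 0 -> 0 < t0 ->
  (forall t, 0 < t -> t < t0 -> forall i j k, inbox dl (phi i j k + t * w i j k)) ->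
  0 <= gsum (gmul w (Gt h a kk g b phi)).
Proof.
move=> Hw Ht0 Hin.
set D := gsum (gmul w (Gt h a kk g b phi)).
set C := Cw h a kk phi w.
have [HD|//] := ltrP D 0.
exfalso.
set s := `|C|.
have Hs : 0 <= s by exact: normr_ge0.
have HCs : C <= s by exact: ler_norm.
set t := Num.min (t0 / 2) (- D / (2 * (s + 1))).
have Hq : 0 < - D / (2 * (s + 1)) by apply: divr_gt0; lra.
have Ht : 0 < t by rewrite /t lt_min; apply/andP; split; lra.
have Htt0 : t < t0.
  have : t <= t0 / 2 by rewrite /t ge_min lexx.
  lra.
have Hts : t * (2 * (s + 1)) <= - D.
  rewrite -ler_pdivlMr; last lra.
  by rewrite /t ge_min lexx orbT.
have Hle := J_pert_le Hh HN a g (b := b) Hdl Hkk (phi := phi) (w := w) (t := t) Hw.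
have Hv : gsum (gdiff phi b) = 0 by rewrite /gdiff gsumB Hsum subrr.
have Hle' := Hle Hv Hbox (Hin t Ht Htt0).
have Hm := Hmin (Hin t Ht Htt0).
have Hps : gsum (pert phi w t) = gsum b.
  by rewrite /pert gsumD gsumZ Hw mulr0 addr0.
have Hm' := Hm Hps.
rewrite -/D -/C in Hle'.
have H0 : 0 <= t * (D + t * C).
  have -> : t * (D + t * C) = t * D + t ^+ 2 * C by ring.
  rewrite /pert in Hle' Hm'; lra.
have H1 : 0 <= D + t * C by rewrite pmulr_rge0 in H0.
have H2 : t * C <= t * s by rewrite ler_wpM2l // ltW.
have E : t * (2 * (s + 1)) = 2 * (t * s) + 2 * t by ring.
lra.
Qed.

Definition dlt (i0 j0 k0 : 'I_N) : G := fun i j k => ((i == i0) && (j == j0) && (k == k0))%:R.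

Lemma gsum_dlt i0 j0 k0 : gsum (dlt i0 j0 k0) = 1.
Proof.
rewrite -(gsum_delta (fun _ _ _ => 1) i0 j0 k0); apply: gsum_ext => i j k.
by rewrite /dlt mulr1.
Qed.

Lemma transfer i1 j1 k1 i2 j2 k2 t0 :
  ((i1, j1, k1) == (i2, j2, k2)) = false -> 0 < t0 ->
  (forall t, 0 < t -> t < t0 ->
     inbox dl (phi i1 j1 k1 + t) /\ inbox dl (phi i2 j2 k2 - t)) ->
  Gt h a kk g b phi i2 j2 k2 <= Gt h a kk g b phi i1 j1 k1.
Proof.
move=> Hpq Ht0 Hin.
set w : G := fun i j k => dlt i1 j1 k1 i j k - dlt i2 j2 k2 i j k.
have Hw : gsum w = 0 by rewrite /w gsumB !gsum_dlt subrr.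
have := fo Hw Ht0.
have -> : gsum (gmul w (Gt h a kk g b phi)) =
    Gt h a kk g b phi i1 j1 k1 - Gt h a kk g b phi i2 j2 k2.
  rewrite -(gsum_delta (Gt h a kk g b phi) i1 j1 k1)
          -(gsum_delta (Gt h a kk g b phi) i2 j2 k2) -gsumB.
  by apply: gsum_ext => i j k; rewrite /gmul /w /dlt; ring.
rewrite subr_ge0; apply.
move=> t Ht Htt i j k; rewrite /w /dlt.
rewrite !xpair_eqE in Hpq.
case: (boolP ((i == i1) && (j == j1) && (k == k1))) => H1.
  move: (H1) => /andP [/andP [/eqP E1 /eqP E2] /eqP E3]; subst.
  rewrite Hpq /= subr0 mulr1; exact: (Hin t Ht Htt).1.
case: (boolP ((i == i2) && (j == j2) && (k == k2))) => H2.
  move: (H2) => /andP [/andP [/eqP E1 /eqP E2] /eqP E3]; subst.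
  rewrite /= sub0r mulrN1; exact: (Hin t Ht Htt).2.
by rewrite subrr mulr0 addr0.
Qed.

End Core2.

Section FP.
Variable R : realType.

Lemma fp_mono (x y : R) : -1 < x -> x <= y -> y < 1 -> fp x <= fp y.
Proof.
move=> H1 H2 H3; rewrite /fp.
have A1 : ln (1 + x) <= ln (1 + y) by rewrite ler_ln ?posrE; lra.
have A2 : ln (1 - y) <= ln (1 - x) by rewrite ler_ln ?posrE; lra.
lra.
Qed.

Lemma fp_top (d : R) : 0 < d -> d <= 1 -> - ln d <= fp (1 - d).
Proof.
move=> H1 H2; rewrite /fp.
have -> : 1 - (1 - d) = d by ring.
have : 0 <= ln (1 + (1 - d)) by apply: ln_ge0; lra.
lra.
Qed.

Lemma fp_bot (d : R) : 0 < d -> d <= 1 -> fp (- (1 - d)) <= ln d.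
Proof.
move=> H1 H2; rewrite /fp.
have -> : 1 + - (1 - d) = d by ring.
have : 0 <= ln (1 - - (1 - d)) by apply: ln_ge0; lra.
lra.
Qed.

End FP.

Section Exle.
Variables (R : realType) (N : nat).
Hypothesis HN : (0 < N)%N.

Lemma gsum_lt (u v : grid R N) : (forall i j k, u i j k < v i j k) -> gsum u < gsum v.
Proof.
move=> H.
have Hhas : has (fun _ : 'I_N => true) (index_enum 'I_N).
  by apply/hasP; exists (Ordinal HN); [exact: mem_index_enum|].
rewrite /gsum; apply: ltr_sum => // i _; apply: ltr_sum => // j _;
  apply: ltr_sum => // k _; exact: H.
Qed.

Lemma exists_le (u v : grid R N) : gsum u = gsum v ->
  exists i j k, u i j k <= v i j k.
Proof.
move=> E; case: (pselect (exists i j k, u i j k <= v i j k)) => // Hn.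
exfalso.
have H : forall i j k, v i j k < u i j k.
  move=> i j k; rewrite ltNge; apply/negP => Hle; apply: Hn; by exists i, j, k.
by have := gsum_lt H; rewrite E ltxx.
Qed.

End Exle.

Lemma core_exists (R : realType) (N : nat) (h a kk : R) (g b : grid R N) (c : R) :
  h != 0 -> (0 < N)%N -> kk != 0 -> -1 < c -> c < 1 ->
  gsum (fun (_ _ _ : 'I_N) => c) = gsum b ->
  exists phi : grid R N, (forall i j k, -1 < phi i j k < 1) /\ gsum phi = gsum b /\
    exists C, forall i j k, Gt h a kk g b phi i j k = C.
Proof.
move=> Hh HN Hkk Hc1 Hc2 Hcs.
set K := K0 h a kk g b.
set X := `|fp c| + 2 * `|K| + 1.
have HX : 1 <= X by have := normr_ge0 (fp c); have := normr_ge0 K; rewrite /X; lra.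
set e := expR (- X).
have He0 : 0 < e by exact: expR_gt0.
have He1 : e <= 1 by rewrite /e -expR0 ler_expR; lra.
set m := (1 - `|c|) / 2.
have Hcabs : `|c| < 1 by rewrite ltr_norml; apply/andP; split.
have Hm0 : 0 < m by rewrite /m; lra.
have Hm1 : m <= 1 / 2 by have := normr_ge0 c; rewrite /m; lra.
set dl := m * e.
have Hdl : 0 < dl by apply: mulr_gt0.
have Hdlm : dl <= m by rewrite /dl ler_piMr // ltW.
have Hdle : dl <= e.
  rewrite /dl; apply: le_trans (_ : 1 * e <= e); last by rewrite mul1r.
  by apply: ler_wpM2r; [exact: ltW | lra].
have Hcn1 := ler_norm c.
have Hcn2 : - c <= `|c| by rewrite -normrN ler_norm.
have Hlndl : ln dl <= - X.
  by rewrite -(expRK (- X)) -/e ler_ln ?posrE.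
have Hinc : inbox dl c by split; rewrite /m in Hdlm; lra.
have [phi [Hbox [Hsum Hmin]]] := exists_min h a kk g Hdl Hinc Hcs.
have Hbnd : bnd1 phi.
  by move=> i j k; have [H1 H2] := Hbox i j k; apply/andP; split; lra.
have Hrest := rest_bound h a kk g b Hbnd.
have Hsc : gsum phi = gsum (fun (_ _ _ : 'I_N) => c) by rewrite Hcs.
have Hup : forall i j k, dl < 1 - phi i j k.
  move=> i j k; rewrite ltNge; apply/negP => Hle.
  have [H1 H2] := Hbox i j k.
  have Ep : phi i j k = 1 - dl by lra.
  have [i' [j' [k' Hq]]] := exists_le HN Hsc.
  have [H3 H4] := Hbox i' j' k'.
  have Hpq : ((i', j', k') == (i, j, k)) = false.
    apply/negP => /eqP [E1 E2 E3]; subst; rewrite /m in Hdlm; lra.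
  have Ht0 : 0 < 1 - dl - c by rewrite /m in Hdlm; lra.
  have Hin : forall t, 0 < t -> t < 1 - dl - c ->
      inbox dl (phi i' j' k' + t) /\ inbox dl (phi i j k - t).
    by move=> t Ht Htt; split; split; rewrite /m in Hdlm; lra.
  have := transfer Hh HN Hkk Hdl Hbox Hsum Hmin Hpq Ht0 Hin.
  rewrite !Gt_rest => Htr.
  have Hfq : fp (phi i' j' k') <= fp c by apply: fp_mono => //; lra.
  have Hfp : - ln dl <= fp (phi i j k).
    rewrite Ep; apply: fp_top => //; rewrite /m in Hdlm; lra.
  have R1 : `|rest h a kk g b phi i j k| <= K := Hrest i j k.
  have R2 : `|rest h a kk g b phi i' j' k'| <= K := Hrest i' j' k'.
  have R3 := ler_norm (rest h a kk g b phi i j k).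
  have R4 := ler_norm (rest h a kk g b phi i' j' k').
  have R3' := ler_norm (- rest h a kk g b phi i j k).
  have R4' := ler_norm (- rest h a kk g b phi i' j' k').
  rewrite normrN in R3'; rewrite normrN in R4'.
  have := ler_norm (fp c); have := ler_norm K => R5 R6.
  rewrite /X in Hlndl; lra.
have Hlo : forall i j k, dl < 1 + phi i j k.
  move=> i j k; rewrite ltNge; apply/negP => Hle.
  have [H1 H2] := Hbox i j k.
  have Ep : phi i j k = - (1 - dl) by lra.
  have [i' [j' [k' Hq]]] := exists_le HN (esym Hsc).
  have [H3 H4] := Hbox i' j' k'.
  have Hpq : ((i, j, k) == (i', j', k')) = false.
    apply/negP => /eqP [E1 E2 E3]; subst; rewrite /m in Hdlm; lra.
  have Ht0 : 0 < 1 + c - dl by rewrite /m in Hdlm; lra.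
  have Hin : forall t, 0 < t -> t < 1 + c - dl ->
      inbox dl (phi i j k + t) /\ inbox dl (phi i' j' k' - t).
    by move=> t Ht Htt; split; split; rewrite /m in Hdlm; lra.
  have := transfer Hh HN Hkk Hdl Hbox Hsum Hmin Hpq Ht0 Hin.
  rewrite !Gt_rest => Htr.
  have Hfq : fp c <= fp (phi i' j' k') by apply: fp_mono => //; lra.
  have Hfp : fp (phi i j k) <= ln dl.
    rewrite Ep; apply: fp_bot => //; rewrite /m in Hdlm; lra.
  have R1 : `|rest h a kk g b phi i j k| <= K := Hrest i j k.
  have R2 : `|rest h a kk g b phi i' j' k'| <= K := Hrest i' j' k'.
  have R3 := ler_norm (rest h a kk g b phi i j k).
  have R4 := ler_norm (rest h a kk g b phi i' j' k').
  have R3' := ler_norm (- rest h a kk g b phi i j k).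
  have R4' := ler_norm (- rest h a kk g b phi i' j' k').
  rewrite normrN in R3'; rewrite normrN in R4'.
  have := ler_norm (- fp c); have := ler_norm K; rewrite normrN => R5 R6.
  rewrite /X in Hlndl; lra.
have Hle : forall i j k i' j' k', Gt h a kk g b phi i j k <= Gt h a kk g b phi i' j' k'.
  move=> i j k i' j' k'.
  case: (boolP ((i', j', k') == (i, j, k))) => Hpq.
    by move/eqP: Hpq => [-> -> ->].
  move/negbTE: Hpq => Hpq.
  have Hu := Hup i' j' k'; have Hl := Hlo i j k.
  set t0 := Num.min (1 - dl - phi i' j' k') (1 + phi i j k - dl).
  have Ht0 : 0 < t0 by rewrite /t0 lt_min; apply/andP; split; lra.
  apply: (transfer Hh HN Hkk Hdl Hbox Hsum Hmin Hpq Ht0).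
  move=> t Ht; rewrite /t0 lt_min => /andP [Ht1 Ht2].
  have [H1 H2] := Hbox i j k; have [H3 H4] := Hbox i' j' k'.
  by split; split; lra.
exists phi; split; [|split] => //.
- move=> i j k; have := Hup i j k; have := Hlo i j k => H1 H2.
  by apply/andP; split; lra.
- set i0 := Ordinal HN.
  exists (Gt h a kk g b phi i0 i0 i0) => i j k.
  by apply/le_anti; rewrite !Hle.
Qed.

Section Misc.
Variables (R : realType) (N : nat).
Local Notation G := (grid R N).

Lemma le_bigmax_seq (I : eqType) (r : seq I) (F : I -> R) x :
  x \in r -> F x <= \big[Num.max/0]_(i <- r) F i.
Proof.
elim: r => [//|y r IH]; rewrite inE big_cons le_max => /orP [/eqP ->|Hx].
  by rewrite lexx.
by rewrite IH ?orbT.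
Qed.

Lemma normInf_ge (u : G) i j k : `|u i j k| <= normInf u.
Proof.
rewrite /normInf.
apply: le_trans (le_bigmax_seq (fun i => \big[Num.max/0]_(j < N)
   \big[Num.max/0]_(k < N) `|u i j k|) (mem_index_enum i)).
apply: le_trans (le_bigmax_seq (fun j => \big[Num.max/0]_(k < N) `|u i j k|)
   (mem_index_enum j)).
exact: (le_bigmax_seq (fun k => `|u i j k|) (mem_index_enum k)).
Qed.

Lemma normInf_lt1 (u : G) : (forall i j k, `|u i j k| < 1) -> normInf u < 1.
Proof.
move=> H; rewrite /normInf.
have Hm : forall x y : R, x < 1 -> y < 1 -> Num.max x y < 1.
  by move=> x y Hx Hy; rewrite gt_max Hx Hy.
apply: (big_ind (fun x => x < 1)); [exact: ltr01 | exact: Hm | move=> i _].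
apply: (big_ind (fun x => x < 1)); [exact: ltr01 | exact: Hm | move=> j _].
apply: (big_ind (fun x => x < 1)); [exact: ltr01 | exact: Hm | move=> k _].
exact: H.
Qed.

Lemma gsum_ge0 (u : G) : (forall i j k, 0 <= u i j k) -> 0 <= gsum u.
Proof.
move=> H; rewrite /gsum; apply: sumr_ge0 => i _; apply: sumr_ge0 => j _;
  apply: sumr_ge0 => k _; exact: H.
Qed.

Lemma gsum_nonneg_eq0 (u : G) : (forall i j k, 0 <= u i j k) -> gsum u <= 0 ->
  forall i j k, u i j k = 0.
Proof.
move=> H Hle i j k.
have E : gsum u = 0 by apply/le_anti; rewrite Hle gsum_ge0.
have P1 : forall i, 0 <= \sum_j \sum_k u i j k.
  by move=> ?; apply: sumr_ge0 => ? _; apply: sumr_ge0 => ? _; exact: H.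
have P2 : forall j, 0 <= \sum_k u i j k.
  by move=> ?; apply: sumr_ge0 => ? _; exact: H.
have P3 : forall k, 0 <= u i j k by move=> ?; exact: H.
have Hi := psum_eq0 P1 E i.
have Hj := psum_eq0 P2 Hi j.
exact: (psum_eq0 P3 Hj k).
Qed.

Lemma fp_smono (x y : R) : -1 < x -> x < y -> y < 1 -> fp x < fp y.
Proof.
move=> H1 H2 H3; rewrite /fp.
have A1 : ln (1 + x) < ln (1 + y) by rewrite ltr_ln ?posrE; lra.
have A2 : ln (1 - y) < ln (1 - x) by rewrite ltr_ln ?posrE; lra.
lra.
Qed.

Lemma fp_prod_ge0 (x y : R) : -1 < x < 1 -> -1 < y < 1 -> 0 <= (x - y) * (fp x - fp y).
Proof.
move=> /andP [H1 H2] /andP [H3 H4].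
case: (ltrgtP x y) => Hxy.
- have := fp_smono H1 Hxy H4 => Hf; apply: mulr_le0; lra.
- have := fp_smono H3 Hxy H2 => Hf; apply: mulr_ge0; lra.
- by rewrite Hxy subrr mul0r.
Qed.

Lemma fp_prod_eq0 (x y : R) : -1 < x < 1 -> -1 < y < 1 ->
  (x - y) * (fp x - fp y) = 0 -> x = y.
Proof.
move=> /andP [H1 H2] /andP [H3 H4] /eqP; rewrite mulf_eq0 => /orP [|/eqP E].
  by rewrite subr_eq0 => /eqP.
case: (ltrgtP x y) => Hxy //.
- by have := fp_smono H1 Hxy H4; lra.
- by have := fp_smono H3 Hxy H2; lra.
Qed.

End Misc.

Lemma uniq_sol (R : realType) (N : nat) (h eps theta0 dt A : R)
  (phinm1 phin phi1 mu1 phi2 mu2 : grid R N) :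
  0 < dt -> 0 <= A ->
  (forall i j k, -1 < phi1 i j k < 1) -> (forall i j k, -1 < phi2 i j k < 1) ->
  scheme h eps theta0 dt A phinm1 phin phi1 mu1 ->
  scheme h eps theta0 dt A phinm1 phin phi2 mu2 -> phi1 = phi2.
Proof.
move=> Hdt HA B1 B2 [E11 E12] [E21 E22].
have Hdt0 : dt != 0 by rewrite gt_eqF.
set d := gdiff phi1 phi2; set m := gdiff mu1 mu2.
have Hd : forall i j k, d i j k = (2 * dt / 3) * lap_h h m i j k.
  move=> i j k.
  have -> : lap_h h m i j k = lap_h h mu1 i j k - lap_h h mu2 i j k.
    by rewrite /m /gdiff /lap_h /=; ring.
  by rewrite -E11 -E21 /d /gdiff; field.
set a := A * dt + eps ^+ 2.
have Ha : 0 <= a by rewrite /a addr_ge0 ?sqr_ge0 // mulr_ge0 // ltW.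
have Hm : forall i j k, m i j k =
    (fp (phi1 i j k) - fp (phi2 i j k)) - a * lap_h h d i j k.
  move=> i j k; rewrite /m /gdiff E12 E22 /fp /a /d /gdiff /lap_h /=; ring.
have S1 : gsum (gmul d m) = (2 * dt / 3) * gsum (gmul m (lap_h h m)).
  rewrite -gsumZ; apply: gsum_ext => i j k; rewrite /gmul Hd; ring.
have S1le : gsum (gmul d m) <= 0.
  rewrite S1; apply: mulr_ge0_le0; last exact: lap_nonpos.
  by apply: divr_ge0; [apply: mulr_ge0; [|exact: ltW]|].
have S2 : gsum (gmul d m) = gsum (fun i j k => d i j k * (fp (phi1 i j k) - fp (phi2 i j k)))
    - a * gsum (gmul d (lap_h h d)).
  rewrite -gsumZ -gsumB; apply: gsum_ext => i j k; rewrite /gmul Hm; ring.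
have S3 : a * gsum (gmul d (lap_h h d)) <= 0.
  by apply: mulr_ge0_le0 => //; exact: lap_nonpos.
have S4 : gsum (fun i j k => d i j k * (fp (phi1 i j k) - fp (phi2 i j k))) <= 0.
  by move: S1le; rewrite S2; lra.
have Z := gsum_nonneg_eq0 (fun i j k => fp_prod_ge0 (B1 i j k) (B2 i j k)) S4.
do 3 (apply: funext => ?); apply: fp_prod_eq0; [exact: B1|exact: B2|exact: Z].
Qed.

Lemma gmean_gsum (R : realType) (N : nat) (L : R) (u : grid R N) :
  L != 0 -> (N%:R : R) != 0 -> gmean L (L / N%:R) u = gsum u / N%:R ^+ 3.
Proof.
move=> HL HN; rewrite /gmean /ip.
have -> : \sum_(i < N) \sum_(j < N) \sum_(k < N) u i j k * 1 = gsum u.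
  exact: (gsum_ext (u := fun i j k => u i j k * 1) (v := u) (fun i j k => mulr1 _)).
field; rewrite HL HN //.
Qed.

Unset Implicit Arguments. Set Strict Implicit.

Theorem theorem6p1 (R : realType) (L eps theta0 dt A M : R) (N : nat)
  (phin phinm1 : grid R N) :
  0 < L -> 0 < eps -> 0 < theta0 -> 0 < dt -> 0 <= A -> (0 < N)%N -> 0 < M ->
  normInf phin <= M -> normInf phinm1 <= M ->
  gmean L (L / N%:R) phin = gmean L (L / N%:R) phinm1 ->
  `|gmean L (L / N%:R) phin| < 1 ->
  exists! phi : grid R N,
    gmean L (L / N%:R) (fun i j k => phi i j k - gmean L (L / N%:R) phin) = 0 /\
    normInf phi < 1 /\
    exists mu : grid R N, scheme (L / N%:R) eps theta0 dt A phinm1 phin phi mu.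
Proof.
move=> HL Heps Hth Hdt HA HN HM _ _ Hmean Habs.
have HL0 : L != 0 by rewrite gt_eqF.
have HN0 : (N%:R : R) != 0 by rewrite pnatr_eq0 -lt0n.
have HN3 : (N%:R : R) ^+ 3 != 0 by rewrite expf_neq0.
have Hdt0 : dt != 0 by rewrite gt_eqF.
have GM := fun u => @gmean_gsum R N L u HL0 HN0.
set h := L / N%:R.
have Hh : h != 0 by rewrite /h mulf_neq0 ?invr_eq0.
have Hsn : gsum phin = gsum phinm1.
  have := congr1 (fun z => z * N%:R ^+ 3) Hmean; rewrite /= !GM !divfK //.
set c := gmean L h phin.
have Hc : c = gsum phin / N%:R ^+ 3 by rewrite /c GM.
set b : grid R N := fun i j k => (4 * phin i j k - phinm1 i j k) / 3.
have Hcs : gsum (fun (_ _ _ : 'I_N) => c) = gsum b.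
  rewrite gsum_const (gsum_ext (v := fun i j k => 3^-1 * (4 * phin i j k - phinm1 i j k))); last first.
    by move=> i j k; rewrite /b mulrC.
  by rewrite gsumZ gsumB gsumZ -Hsn Hc; field.
have /andP [Hc1 Hc2] : -1 < c < 1 by rewrite -ltr_norml.
set kk := 2 * dt / 3.
have Hkk : kk != 0 by rewrite /kk mulf_neq0 ?mulf_neq0 ?invr_eq0 ?pnatr_eq0.
set a := A * dt + eps ^+ 2.
set g : grid R N := fun i j k => - (theta0 * (2 * phin i j k - phinm1 i j k))
   + A * dt * lap_h h phin i j k.
have [phi [Hb [Hs [C HC]]]] := @core_exists R N h a kk g b c Hh HN Hkk Hc1 Hc2 Hcs.
set mu : grid R N := fun i j k => ln (1 + phi i j k) - ln (1 - phi i j k)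
   - theta0 * (2 * phin i j k - phinm1 i j k)
   - A * dt * lap_h h (fun a b c => phi a b c - phin a b c) i j k
   - eps ^+ 2 * lap_h h phi i j k.
have Hsch : scheme h eps theta0 dt A phinm1 phin phi mu.
  split; last by [].
  move=> i j k.
  have Hmu : mu = fun i j k => 1 / kk * Lg h (gdiff phi b) i j k + C.
    apply: funext => x; apply: funext => y; apply: funext => z.
    rewrite -(HC x y z) /Gt /mu /fp /g /a /lap_h /=; ring.
  rewrite Hmu lap_lin lap_const addr0 (Lg_spec Hh HN); last first.
    by rewrite /gdiff gsumB Hs subrr.
  by rewrite /gdiff /b /kk; field; rewrite Hdt0.
exists phi; split.
- split; [|split].
  + rewrite GM gsumB gsum_const Hs -Hcs gsum_const subrr mul0r //.
  + apply: normInf_lt1 => i j k; rewrite ltr_norml; exact: Hb.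
  + by exists mu.
- move=> y [_ [Hy [mu' Hsch']]].
  apply: (uniq_sol Hdt HA Hb _ Hsch Hsch').
  move=> i j k; rewrite -ltr_norml; exact: le_lt_trans (normInf_ge y i j k) Hy.
Qed.
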